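(* Let $S,T$ be stochastic matrices on a finite set $\Omega$, both reversible w.r.t. a probability measure $\mu$ with full support and both positive semidefinite, and assume $S^2=S$. Then for every $a\in[0,1]$, $$\lambda(STS)\ge\lambda(aS+(1-a)T).$$
   Context: $\langle f,g\rangle_\mu=\sum_{x}f(x)g(x)\mu(x)$, $\mu(f)=\sum_xf(x)\mu(x)$. A matrix $P$ is positive semidefinite if it is self-adjoint in $L_2(\mu)$ and $\langle f,Pf\rangle_\mu\ge0$ for all $f$. For a positive semidefinite stochastic $P$ reversible w.r.t. $\mu$, $\lambda(P)=1-\sup\{\langle f,Pf\rangle_\mu:\mu(f)=0,\ \langle f,f\rangle_\mu\le1\}$ (equal to $1$ minus the second largest eigenvalue when $P$ is irreducible, which coincides with the absolute spectral gap). *)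

(* Defs.v *)
From mathcomp Require Import all_boot.
From Stdlib Require Import Reals ClassicalEpsilon.
Set Implicit Arguments. Unset Strict Implicit.
Open Scope R_scope.

Definition rsum {T : finType} (F : T -> R) : R := \big[Rplus/0]_(x : T) F x.

Definition mxmul {T : finType} (P Q : T -> T -> R) : T -> T -> R :=
  fun x y => rsum (fun z => P x z * Q z y).
Definition mxadd {T : finType} (P Q : T -> T -> R) : T -> T -> R :=
  fun x y => P x y + Q x y.
Definition mxscale {T : finType} (a : R) (P : T -> T -> R) : T -> T -> R :=
  fun x y => a * P x y.
Definition mxapply {T : finType} (P : T -> T -> R) (f : T -> R) : T -> R :=
  fun x => rsum (fun y => P x y * f y).

Definition inner {T : finType} (mu f g : T -> R) : R := rsum (fun x => f x * g x * mu x).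
Definition mean {T : finType} (mu f : T -> R) : R := rsum (fun x => f x * mu x).

Definition prob_full_support {T : finType} (mu : T -> R) : Prop :=
  (forall x, 0 < mu x) /\ rsum mu = 1.
Definition stochastic {T : finType} (P : T -> T -> R) : Prop :=
  (forall x y, 0 <= P x y) /\ (forall x, rsum (P x) = 1).
Definition reversible {T : finType} (mu : T -> R) (P : T -> T -> R) : Prop :=
  forall x y, mu x * P x y = mu y * P y x.
Definition self_adjoint {T : finType} (mu : T -> R) (P : T -> T -> R) : Prop :=
  forall f g, inner mu f (mxapply P g) = inner mu (mxapply P f) g.
Definition psd {T : finType} (mu : T -> R) (P : T -> T -> R) : Prop :=
  self_adjoint mu P /\ (forall f, 0 <= inner mu f (mxapply P f)).

(* Supremum of a set of reals (0 if not nonempty & bounded above). *)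
Definition Rsup (E : R -> Prop) : R :=
  match excluded_middle_informative (bound E /\ exists x, E x) with
  | left H => proj1_sig (completeness E (proj1 H) (proj2 H))
  | right _ => 0
  end.

Definition gap {T : finType} (mu : T -> R) (P : T -> T -> R) : R :=
  1 - Rsup (fun r => exists f : T -> R,
              mean mu f = 0 /\ inner mu f f <= 1 /\ r = inner mu f (mxapply P f)).

(* Main.v *)
Require Import Defs.
From HB Require Import structures.
From mathcomp Require Import all_boot.
From Stdlib Require Import Reals Lra.
Open Scope R_scope.
Set Implicit Arguments. Unset Strict Implicit.
HB.instance Definition _ := Monoid.isComLaw.Build R 0 Rplus (fun a b c => esym (Rplus_assoc a b c)) Rplus_comm Rplus_0_l.
Lemma rsum_add (T : finType) (F G : T -> R) : rsum (fun x => F x + G x) = rsum F + rsum G.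
Proof. by rewrite /rsum big_split. Qed.
Lemma rsum_swap (T : finType) (F : T -> T -> R) :
  rsum (fun x => rsum (fun y => F x y)) = rsum (fun y => rsum (fun x => F x y)).
Proof. by rewrite /rsum exchange_big. Qed.
Lemma rsum_scal (T : finType) c (F : T -> R) : rsum (fun x => c * F x) = c * rsum F.
Proof. rewrite /rsum; elim/big_rec2: _ => [|i y1 y2 _ ->]; ring. Qed.
Lemma rsum_le (T : finType) (F G : T -> R) : (forall x, F x <= G x) -> rsum F <= rsum G.
Proof. move=> H; rewrite /rsum; elim/big_rec2: _ => [|i y1 y2 _ Hy]; [lra| by apply Rplus_le_compat]. Qed.
From Stdlib Require Import FunctionalExtensionality ClassicalEpsilon.
Lemma rsum_ext (T : finType) (F G : T -> R) : (forall x, F x = G x) -> rsum F = rsum G.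
Proof. by move=> H; rewrite /rsum; apply: eq_bigr => i _. Qed.
Lemma rsum_scalr (T : finType) c (F : T -> R) : rsum (fun x => F x * c) = rsum F * c.
Proof. rewrite Rmult_comm -rsum_scal; apply: rsum_ext => x; ring. Qed.

Section M.
Variable (Om : finType) (mu : Om -> R).
Hypothesis mupos : forall x, 0 < mu x.

Lemma apply_mul (P Q : Om -> Om -> R) f :
  mxapply (mxmul P Q) f = mxapply P (mxapply Q f).
Proof.
apply: functional_extensionality => x; rewrite /mxapply /mxmul.
rewrite (rsum_ext (G := fun y => rsum (fun z => P x z * Q z y * f y))); last first.
  by move=> y; rewrite -rsum_scalr.
rewrite rsum_swap; apply: rsum_ext => z; rewrite -rsum_scal; apply: rsum_ext => y; ring.
Qed.

Lemma inner_le (P : Om -> Om -> R) h : stochastic P -> reversible mu P ->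
  inner mu h (mxapply P h) <= inner mu h h.
Proof.
move=> [P0 P1] Prev.
pose A x y := mu x * P x y * (h x * h x) / 2.
have E1 : inner mu h (mxapply P h) = rsum (fun x => rsum (fun y => h x * (P x y * h y) * mu x)).
  rewrite /inner /mxapply; apply: rsum_ext => x.
  rewrite (Rmult_comm (h x)) -!rsum_scalr; apply: rsum_ext => y; ring.
have E3 : rsum (fun x => rsum (fun y => A x y)) = inner mu h h / 2.
  rewrite /inner /Rdiv -rsum_scalr; apply: rsum_ext => x.
  rewrite /A (rsum_ext (G := fun y => mu x * (h x * h x) / 2 * P x y)); last by move=> y; field.
  rewrite rsum_scal P1; field.
have E2 : inner mu h h = rsum (fun x => rsum (fun y => A x y)) + rsum (fun x => rsum (fun y => A y x)).
  rewrite (rsum_swap (fun x y => A y x)) E3; field.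
rewrite E1 E2 -rsum_add; apply: rsum_le => x; rewrite -rsum_add; apply: rsum_le => y.
rewrite /A -(Prev x y).
have c0 : 0 <= mu x * P x y by apply: Rmult_le_pos; [apply: Rlt_le; apply: mupos | apply: P0].
have := Rmult_le_pos _ _ c0 (Rle_0_sqr (h x - h y)); rewrite /Rsqr => H.
nra.
Qed.

Lemma inner_sym f g : inner mu f g = inner mu g f.
Proof. rewrite /inner; apply: rsum_ext => x; ring. Qed.

Lemma inner_ge0 h : 0 <= inner mu h h.
Proof.
rewrite /inner; rewrite /rsum; elim/big_rec: _ => [|i y _ Hy]; first lra.
have := mupos i; have := Rle_0_sqr (h i); rewrite /Rsqr => ??.
apply: Rplus_le_le_0_compat => //; apply: Rmult_le_pos; lra.
Qed.

Lemma inner_lin g a b u v :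
  inner mu g (fun x => a * u x + b * v x) = a * inner mu g u + b * inner mu g v.
Proof.
rewrite /inner -!rsum_scal -rsum_add; apply: rsum_ext => x; ring.
Qed.

Lemma inner_expand f g : inner mu (fun x => f x - g x) (fun x => f x - g x)
  = inner mu f f - 2 * inner mu f g + inner mu g g.
Proof.
rewrite /inner -rsum_scal /Rminus.
have -> : forall F : Om -> R, - rsum F = rsum (fun x => -1 * F x).
  by move=> F; rewrite rsum_scal; ring.
rewrite -!rsum_add; apply: rsum_ext => x; ring.
Qed.

Lemma mean_apply P f : stochastic P -> self_adjoint mu P -> mean mu (mxapply P f) = mean mu f.
Proof.
move=> [_ P1] Psa.
have Em : forall g, mean mu g = inner mu (fun _ => 1) g.
  by move=> g; rewrite /mean /inner; apply: rsum_ext => x; ring.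
have E1 : mxapply P (fun _ => 1) = (fun _ => 1).
  apply: functional_extensionality => x; rewrite /mxapply.
  rewrite (rsum_ext (G := P x)) ?P1 // => y; ring.
by rewrite !Em Psa E1.
Qed.

Lemma apply_comb a b (P Q : Om -> Om -> R) g :
  mxapply (mxadd (mxscale a P) (mxscale b Q)) g =
  (fun x => a * mxapply P g x + b * mxapply Q g x).
Proof.
apply: functional_extensionality => x; rewrite /mxapply -!rsum_scal -rsum_add.
apply: rsum_ext => y; rewrite /mxadd /mxscale; ring.
Qed.
End M.

Lemma Rsup_spec E : bound E -> (exists x, E x) -> is_lub E (Rsup E).
Proof.
move=> Hb He; rewrite /Rsup.
destruct (excluded_middle_informative (bound E /\ exists x, E x)) as [H|H].
  by case: (completeness E _ _).
by case: H.
Qed.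


Lemma Rsup_mono (A B : R -> Prop) : (exists r, A r) -> bound B ->
  (forall r, A r -> exists r', B r' /\ r <= r') -> Rsup A <= Rsup B.
Proof.
move=> [r0 Ar0] Bb dom.
have Bne : exists x, B x by case: (dom _ Ar0) => r' [? _]; exists r'.
have [ubB _] := Rsup_spec Bb Bne.
have ubA : is_upper_bound A (Rsup B).
  by move=> r Ar; case: (dom _ Ar) => r' [Br' le]; apply: Rle_trans le (ubB _ Br').
have [_ lubA] := Rsup_spec (ex_intro _ _ ubA) (ex_intro _ _ Ar0).
exact: lubA.
Qed.

Lemma rsum0 (T : finType) (F : T -> R) : (forall x, F x = 0) -> rsum F = 0.
Proof. move=> H; rewrite (rsum_ext (G := fun x => 0 * F x)) ?rsum_scal; [ring | move=> x; rewrite H; ring]. Qed.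

Theorem mainTheorem13 (Omega : finType) (mu : Omega -> R)
  (S T : Omega -> Omega -> R)
  (Hmu : prob_full_support mu)
  (HSst : stochastic S) (HTst : stochastic T)
  (HSrev : reversible mu S) (HTrev : reversible mu T)
  (HSpsd : psd mu S) (HTpsd : psd mu T)
  (HSidem : mxmul S S = S)
  (a : R) (Ha : 0 <= a <= 1) :
  gap mu (mxmul (mxmul S T) S) >= gap mu (mxadd (mxscale a S) (mxscale (1 - a) T)).
Proof.
have mupos := proj1 Hmu.
have [HSsa _] := HSpsd.
rewrite /gap.
match goal with |- 1 - Rsup ?A >= 1 - Rsup ?B => suff : Rsup A <= Rsup B by lra end.
apply: Rsup_mono.
- exists 0; exists (fun _ => 0); split; [|split].
  + by apply: rsum0 => x; ring.
  + by rewrite /inner (rsum0 (F := fun x => 0 * 0 * mu x)) //; [lra | move=> x; ring].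
  + by rewrite /inner rsum0 // => x; ring.
- exists 1 => r [f [_ [Hff ->]]].
  rewrite apply_comb inner_lin.
  have h1 := inner_le mupos f HSst HSrev.
  have h2 := inner_le mupos f HTst HTrev.
  nra.
- move=> r [f [Hmf [Hff ->]]].
  set g := mxapply S f.
  have Sg : mxapply S g = g by rewrite /g -apply_mul HSidem.
  have Hfg : inner mu f g = inner mu g g by rewrite -{1}Sg HSsa.
  have Hgg : inner mu g g <= inner mu f f.
    have := inner_ge0 mupos (fun x => f x - g x); rewrite inner_expand; lra.
  exists (inner mu g (mxapply (mxadd (mxscale a S) (mxscale (1 - a) T)) g)); split.
    exists g; split; [|split] => //.
      by rewrite /g mean_apply.
    lra.
  rewrite !apply_mul HSsa -/g apply_comb inner_lin Sg.
  have h2 := inner_le mupos g HTst HTrev.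
  nra.
Qed.
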